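(* Assume the target tube $\mathscr{T}_N$ is closed, $\mathcal{U}$ is compact, and each $f_k$ is continuous on $\mathcal{X}\times\mathcal{U}$. Let $\alpha\in[0,1]$, $k\in\mathbb{N}_{[0,N-1]}$, and let $\mathcal{E}_1,\dots,\mathcal{E}_M\subseteq\mathcal{W}$ be bounded measurable sets such that $\mathbb{P}\big((w_k,\dots,w_{N-1})\in\mathcal{E}_i^{N-k}\big)=\alpha$ for every $i\in\mathbb{N}_{[1,M]}$. Then $$\bigcup_{m=1}^M\mathcal{R}_k(\mathscr{T}_N,\mathcal{E}_m)\subseteq\mathcal{L}_k(\alpha).$$
   Context: Fix $N\in\mathbb{N}$, $N>0$, and write $\mathbb{N}_{[a,b]}=\{a,a+1,\dots,b\}$. Consider the discrete-time system $x_{k+1}=f_k(x_k,u_k)+w_k$, $k=0,\dots,N-1$, with state $x_k\in\mathcal{X}\subseteq\mathbb{R}^n$, input $u_k\in\mathcal{U}\subseteq\mathbb{R}^m$, disturbance $w_k\in\mathcal{W}\subseteq\mathbb{R}^n$ with $0\in\mathcal{W}$, and $f_k:\mathcal{X}\times\mathcal{U}\to\mathcal{X}$. A target tube is a sequence $\mathscr{T}_N=[\mathcal{T}_0,\dots,\mathcal{T}_N]$ of subsets of $\mathcal{X}$; it is called closed (resp. convex) if every $\mathcal{T}_k$ is closed (resp. convex). In the stochastic setting, $w_0,\dots,w_{N-1}$ are i.i.d. random vectors with an absolutely continuous distribution $\mathbb{P}_w$ on $\mathcal{W}$. A Markov policy is a tuple $\pi=[\mu_0,\dots,\mu_{N-1}]$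 of universally measurable maps $\mu_k:\mathcal{X}\to\mathcal{U}$; $\mathcal{M}$ denotes the set of Markov policies. For $\pi\in\mathcal{M}$ and $x_k=y$, $\mathbb{P}^\pi_k(\cdot\,|\,y)$ denotes the probability law of $(x_{k+1},\dots,x_N)$ generated by $x_{t+1}=f_t(x_t,\mu_t(x_t))+w_t$. The stochastic $\alpha$-level reach set is $\mathcal{L}_k(\alpha)=\{y\in\mathcal{T}_k:\sup_{\pi\in\mathcal{M}}\mathbb{P}^\pi_k(\bigcap_{t=k+1}^N\{x_t\in\mathcal{T}_t\}\,|\,y)\ge\alpha\}$. For $\mathcal{E}\subseteq\mathcal{W}$ and $k\in\mathbb{N}_{[0,N-1]}$, the disturbance minimal reach set $\mathcal{R}_k(\mathscr{T}_N,\mathcal{E})$ is the set of $x_k\in\mathcal{T}_k$ for which there exist state-feedback laws $\nu_t:\mathcal{X}\to\mathcal{U}$, $t\in\mathbb{N}_{[k,N-1]}$ (no measurability required), such that for every disturbance sequence $w_k,\dots,w_{N-1}\in\mathcal{E}$ the trajectory $x_{t+1}=f_t(x_t,\nu_t(x_t))+w_t$ satisfies $x_t\in\mathcal{T}_t$ for all $t\in\mathbb{N}_{[k+1,N]}$; also $\mathcal{R}_N(\mathscr{T}_N,\mathcal{E})=\mathcal{T}_N$. *)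

(* Defs.v *)
From HB Require Import structures.
From mathcomp Require Import all_boot all_order all_algebra.
From mathcomp Require Import all_classical all_reals all_analysis.
Set Implicit Arguments. Unset Strict Implicit. Unset Printing Implicit Defensive.
Import Order.TTheory GRing.Theory Num.Theory.
Import numFieldNormedType.Exports.
Local Open Scope classical_set_scope.
Local Open Scope ring_scope.

(* R^n is modelled as row vectors 'rV[R]_n (with the standard product/sup-norm
   topology); [vecB R n] is R^n equipped with its Borel sigma-algebra
   (generated by the open sets). *)
Definition vecB (R : realType) (n : nat) := g_sigma_algebraType (@open 'rV[R]_n).

Section Defs.
Variables (R : realType) (n m : nat).

(* Universal measurability of mu : R^n -> R^m: the preimage of every Borel set
   is measurable for the completion of every Borel probability measure. *)
Definition univ_measurable (mu : 'rV[R]_n -> 'rV[R]_m) : Prop :=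
  forall (nu : probability (vecB R n) R) (B : set (vecB R m)),
    measurable B ->
    exists A1 A2 : set (vecB R n),
      [/\ measurable A1, measurable A2,
          A1 `<=` mu @^-1` B, mu @^-1` B `<=` A2 & nu (A2 `\` A1) = 0%E].

Definition box (a b : 'rV[R]_n) : set 'rV[R]_n :=
  [set x | forall i, a ord0 i <= x ord0 i <= b ord0 i].
Definition box_vol (a b : 'rV[R]_n) : R := \prod_(i < n) (b ord0 i - a ord0 i).
Definition lebesgue_null (A : set 'rV[R]_n) : Prop :=
  forall eps : R, 0 < eps ->
    exists a b : nat -> 'rV[R]_n,
      [/\ (forall j i, a j ord0 i <= b j ord0 i),
          A `<=` \bigcup_j box (a j) (b j)
        & (\sum_(0 <= j <oo) (box_vol (a j) (b j))%:E < eps%:E)%E].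

Definition abs_continuous (Pw : probability (vecB R n) R) : Prop :=
  forall A : set (vecB R n), measurable A -> lebesgue_null A -> Pw A = 0%E.

Definition iid_with_law d (Omega : measurableType d) (P : probability Omega R)
    (w : nat -> Omega -> 'rV[R]_n) (N : nat) (Pw : probability (vecB R n) R) : Prop :=
  [/\ (forall t, (t < N)%N -> measurable_fun setT (w t : Omega -> vecB R n)),
      (forall t (B : set (vecB R n)), (t < N)%N -> measurable B ->
          P (w t @^-1` B) = Pw B)
    & (forall Bs : nat -> set (vecB R n), (forall t, measurable (Bs t)) ->
          P (\bigcap_(t in [set t | (t < N)%N]) (w t @^-1` Bs t))
          = (\prod_(t < N) P (w t @^-1` Bs t))%E)].

(* Trajectory started at x_k = y under feedback pi and disturbances ws:
   traj j = x_{k+j}. *)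
Fixpoint traj (f : nat -> 'rV[R]_n -> 'rV[R]_m -> 'rV[R]_n)
    (pi : nat -> 'rV[R]_n -> 'rV[R]_m) (k : nat) (y : 'rV[R]_n)
    (ws : nat -> 'rV[R]_n) (j : nat) : 'rV[R]_n :=
  match j with
  | 0 => y
  | j'.+1 => let x := traj f pi k y ws j' in
             f (k + j')%N x (pi (k + j')%N x) + ws (k + j')%N
  end.

Definition stays_in (T : nat -> set 'rV[R]_n) (N k : nat)
    (x : nat -> 'rV[R]_n) : Prop :=
  forall j, (1 <= j <= N - k)%N -> T (k + j)%N (x j).

Definition min_reach_set (f : nat -> 'rV[R]_n -> 'rV[R]_m -> 'rV[R]_n)
    (X : set 'rV[R]_n) (U : set 'rV[R]_m) (T : nat -> set 'rV[R]_n) (N : nat)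
    (E : set 'rV[R]_n) (k : nat) : set 'rV[R]_n :=
  [set x | T k x /\
     exists nu : nat -> 'rV[R]_n -> 'rV[R]_m,
       (forall t z, (k <= t < N)%N -> X z -> U (nu t z)) /\
       (forall ws : nat -> 'rV[R]_n, (forall t, (k <= t < N)%N -> E (ws t)) ->
          stays_in T N k (traj f nu k x ws))].

Definition markov_policy (X : set 'rV[R]_n) (U : set 'rV[R]_m) (N : nat)
    (pi : nat -> 'rV[R]_n -> 'rV[R]_m) : Prop :=
  forall t, (t < N)%N -> univ_measurable (pi t) /\ (forall z, X z -> U (pi t z)).

(* probability of a (possibly non-measurable) event, through the inner
   measure; this coincides with the completed probability on the universally
   measurable events considered here *)
Definition inner_prob d (Omega : measurableType d) (P : probability Omega R)
    (S : set Omega) : \bar R :=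
  ereal_sup [set P A | A in [set A | measurable A /\ A `<=` S]].

Definition reach_prob d (Omega : measurableType d) (P : probability Omega R)
    (w : nat -> Omega -> 'rV[R]_n)
    (f : nat -> 'rV[R]_n -> 'rV[R]_m -> 'rV[R]_n) (T : nat -> set 'rV[R]_n)
    (N k : nat) (pi : nat -> 'rV[R]_n -> 'rV[R]_m) (y : 'rV[R]_n) : \bar R :=
  inner_prob P [set om | stays_in T N k (traj f pi k y (fun t => w t om))].

Definition stoch_reach_set d (Omega : measurableType d) (P : probability Omega R)
    (w : nat -> Omega -> 'rV[R]_n)
    (f : nat -> 'rV[R]_n -> 'rV[R]_m -> 'rV[R]_n)
    (X : set 'rV[R]_n) (U : set 'rV[R]_m) (T : nat -> set 'rV[R]_n)
    (N k : nat) (alpha : R) : set 'rV[R]_n :=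
  [set y | T k y /\
     (alpha%:E <= ereal_sup [set reach_prob P w f T N k pi y
                            | pi in markov_policy X U N])%E].

End Defs.

(* Main.v *)
Require Import Defs.
From HB Require Import structures.
From mathcomp Require Import all_boot all_order all_algebra.
From mathcomp Require Import all_classical all_reals all_analysis.
Import Order.TTheory GRing.Theory Num.Theory.
Import numFieldNormedType.Exports.
Local Open Scope classical_set_scope.
Local Open Scope ring_scope.
Set Implicit Arguments. Unset Strict Implicit.
From mathcomp Require Import ring lra zify.

Section Helpers.
Variables (R : realType).

Lemma closed_meas n (A : set 'rV[R]_n) : closed A -> measurable (A : set (vecB R n)).
Proof.
move=> cA; rewrite -(setCK A); apply: measurableC; apply: sub_sigma_algebra.
by rewrite /= openC.
Qed.

Lemma open_meas n (A : set 'rV[R]_n) : open A -> measurable (A : set (vecB R n)).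
Proof. by move=> oA; apply: sub_sigma_algebra. Qed.

Lemma nbhsX n m (x : 'rV[R]_n) (y : 'rV[R]_m) V W :
  nbhs x V -> nbhs y W -> nbhs (x, y) (V `*` W).
Proof. by move=> hV hW; exists (V, W). Qed.

Lemma nbhsX_inv n m (x : 'rV[R]_n) (y : 'rV[R]_m) Z :
  nbhs (x, y) Z -> exists V W, [/\ nbhs x V, nbhs y W & V `*` W `<=` Z].
Proof. by case=> -[V W] /= [hV hW] VWZ; exists V, W. Qed.

Lemma test_ball m (u v : 'rV[R]_m) e : 0 < e -> (forall i, `|u ord0 i - v ord0 i| < e) -> ball u e v.
Proof.
move=> e0 h; split => // i j; rewrite (ord1 i) -ball_normE /ball_ /=; exact: h.
Qed.

End Helpers.

Section T2.
Variables (R : realType).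

Lemma proj_closed n m (H : set ('rV[R]_n * 'rV[R]_m)) (K : set 'rV[R]_m) :
  closed H -> compact K -> closed [set x | exists u, K u /\ H (x, u)].
Proof.
move=> cH cK x0 clx0.
pose B (V : set 'rV[R]_n) := [set u | K u /\ exists x, V x /\ H (x, u)].
pose F := filter_from (nbhs x0) B.
have FF : Filter F.
  apply: filter_from_filter; first by exists setT; exact: filterT.
  move=> V1 V2 h1 h2; exists (V1 `&` V2); first exact: filterI.
  by move=> u [Ku [x [[V1x V2x] Hx]]]; split; split=> //; exists x.
have PF : ProperFilter F.
  apply: filter_from_proper => V hV.
  have [z [[u [Ku Hzu]] Vz]] := clx0 V hV.
  by exists u; split=> //; exists z.
have FK : F K by exists setT; [exact: filterT | move=> u []].
have [u0 [Ku0 clu0]] := cK F PF FK.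
exists u0; split=> //; apply: cH => Z hZ.
have [V [W [hV hW VWZ]]] := nbhsX_inv hZ.
have [u [[Ku [x [Vx Hxu]]] Wu]] := clu0 (B V) W (@in_filter_from _ _ (nbhs x0) B V hV) hW.
by exists (x, u); split=> //; apply: VWZ.
Qed.

Lemma slice_closed n m (H : set ('rV[R]_n * 'rV[R]_m)) z :
  closed H -> closed [set u | H (z, u)].
Proof.
move=> cH u clu; apply: cH => Z hZ.
have [V [W [hV hW VWZ]]] := nbhsX_inv hZ.
have [v [Hv Wv]] := clu W hW.
exists (z, v); split=> //; apply: VWZ; split=> //=; exact: nbhs_singleton.
Qed.

Lemma H_closed n m (F : 'rV[R]_n * 'rV[R]_m -> 'rV[R]_n) (X T C E : set 'rV[R]_n)
  (U : set 'rV[R]_m) :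
  {within X `*` U, continuous F} -> T `<=` X -> closed T -> closed U -> closed C ->
  closed [set p | T p.1 /\ U p.2 /\ forall e, E e -> C (F p + e)].
Proof.
move=> cF TX cT cU cC [z u] cl.
have Tz : T z.
  apply: cT => V hV; have [q [[Tq _] [/= Vq _]]] := cl (V `*` setT) (nbhsX hV filterT).
  by exists q.1.
have Uu : U u.
  apply: cU => V hV; have [q [[_ [Uq _]] [_ /= Vq]]] := cl (setT `*` V) (nbhsX filterT hV).
  by exists q.2.
split=> //; split=> // e Ee; apply: cC => B hB.
have hc := (subspace_continuousP _ F).1 cF (z, u) (conj (TX _ Tz) Uu).
have hc2 : (fun q => F q + e) @ within (X `*` U) (nbhs (z, u)) --> F (z, u) + e.
  by apply: cvgD => //; exact: cvg_cst.
have hN := hc2 B hB; rewrite /= in hN.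
have hN2 : nbhs (z, u) [set q | (X `*` U) q -> B (F q + e)] by exact: hN.
clear hN; move: hN2 => hN.
have [q [[Tq [Uq hq]] hq2]] := cl _ hN.
by exists (F q + e); split; [exact: hq | apply: hq2; split; [exact: TX | ]].
Qed.

Lemma box_closed m (a b : 'rV[R]_m) : closed (box a b).
Proof.
have -> : box a b = \bigcap_(i in setT) ([set y : 'rV[R]_m | a ord0 i <= y ord0 i] `&`
   [set y | y ord0 i <= b ord0 i]).
  apply/seteqP; split => y /=.
    by move=> h i _; have /andP[] := h i.
  by move=> h i; have [-> ->] := h i I.
apply: closed_bigI => i _; apply: closedI.
  apply: (@preimage_closed _ _ (fun y : 'rV[R]_m => y ord0 i) [set r | a ord0 i <= r]).
    by move=> ? _; exact: coord_continuous.
  exact: closed_ge.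
apply: (@preimage_closed _ _ (fun y : 'rV[R]_m => y ord0 i) [set r | r <= b ord0 i]).
  by move=> ? _; exact: coord_continuous.
exact: closed_le.
Qed.

End T2.


Lemma cnt_bigcup_meas d (T : measurableType d) (I : countType) (F : I -> set T) :
  (forall i, measurable (F i)) -> measurable (\bigcup_(i in setT) F i).
Proof.
move=> mF.
have -> : \bigcup_(i in setT) F i =
    \bigcup_(k in setT) (if unpickle k is Some i then F i else set0).
  apply/seteqP; split => x.
    by move=> [i _ Fi]; exists (pickle i) => //; rewrite pickleK.
  by move=> [k _]; case: (unpickle k) => // i Fi; exists i.
by apply: bigcup_measurable => k _; case: (unpickle k).
Qed.

Lemma cnt_bigcap_meas d (T : measurableType d) (I : countType) (F : I -> set T) :
  (forall i, measurable (F i)) -> measurable (\bigcap_(i in setT) F i).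
Proof.
move=> mF; rewrite -[X in measurable X]setCK setC_bigcap; apply: measurableC.
by apply: cnt_bigcup_meas => i; exact: measurableC.
Qed.

Lemma const_meas d (T : measurableType d) (P : Prop) : measurable [set _ : T | P].
Proof.
case: (pselect P) => h.
  by have -> : [set _ : T | P] = setT by apply/seteqP; split.
by have -> : [set _ : T | P] = set0 by apply/seteqP; split.
Qed.

Section Sel.
Variables (R : realType) (n m : nat).
Variables (K : 'rV[R]_n -> set 'rV[R]_m) (a0 : 'rV[R]_m) (L : R) (d0 : 'rV[R]_m).
Hypothesis L0 : 0 < L.
Hypothesis Kc : forall x, compact (K x).
Hypothesis Kbox : forall x, K x `<=` box a0 (a0 + L *: const_mx 1).
Hypothesis Kmeas : forall a b,
  measurable ([set x | K x `&` box a b !=set0] : set (vecB R n)).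

Local Notation bT := {ffun 'I_m -> bool}.

Definition hs (k : nat) : R := L / 2 ^+ k.

Lemma hsS k : hs k = hs k.+1 + hs k.+1.
Proof.
rewrite /hs exprS; have h : (2 ^+ k : R) != 0 by rewrite expf_neq0 // pnatr_eq0.
by field; rewrite h.
Qed.

Lemma hs_ge0 k : 0 <= hs k.
Proof. by rewrite /hs divr_ge0 // ?exprn_ge0 // ltW. Qed.

Fixpoint corner (p : seq bT) : 'rV[R]_m :=
  if p is b :: q then corner q + hs (size q).+1 *: \row_i ((b i)%:R : R) else a0.
Definition cube (p : seq bT) := box (corner p) (corner p + hs (size p) *: const_mx 1).

Lemma cubeE p u : cube p u <->
  forall i, corner p ord0 i <= u ord0 i /\ u ord0 i <= corner p ord0 i + hs (size p).
Proof.
rewrite /cube /box; split => h i; move: (h i); rewrite !mxE mulr1.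
  by move/andP.
by move=> [-> ->].
Qed.

Lemma corner_cons b p i :
  corner (b :: p) ord0 i = corner p ord0 i + (if b i then hs (size p).+1 else 0).
Proof. by rewrite /= !mxE; case: (b i); rewrite ?mulr1 ?mulr0. Qed.

Lemma cube_sub b p : cube (b :: p) `<=` cube p.
Proof.
move=> u /cubeE h; apply/cubeE => i; move: (h i); rewrite corner_cons /=.
have := hsS (size p); have := hs_ge0 (size p).+1.
case: (b i) => h1 h2 [h3 h4]; split.
all: lra.
Qed.

Lemma cube_cover p u : cube p u -> exists b, cube (b :: p) u.
Proof.
move=> /cubeE h.
exists [ffun i => corner p ord0 i + hs (size p).+1 <= u ord0 i].
apply/cubeE => i; rewrite corner_cons ffunE /=; have [h1 h2] := h i.
have := hsS (size p).
case: ifP => [h3|/negbT h3] h4; rewrite ?ltNge -?ltNge in h3; split.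
all: lra.
Qed.

Lemma cube_diam p u v i : cube p u -> cube p v ->
  `|u ord0 i - v ord0 i| <= hs (size p).
Proof.
move=> /cubeE hu /cubeE hv; have [h1 h2] := hu i; have [h3 h4] := hv i.
rewrite ler_norml; apply/andP; split; lra.
Qed.

Definition choose x (p : seq bT) : bT :=
  odflt [ffun => false] [pick b : bT | `[< K x `&` cube (b :: p) !=set0 >] ].

Fixpoint path x j : seq bT :=
  if j is j'.+1 then choose x (path x j') :: path x j' else [::].

Lemma size_path x j : size (path x j) = j.
Proof. by elim: j => //= j ->. Qed.

Lemma meas_choose p (S : set bT) : measurable [set x : vecB R n | S (choose x p)].
Proof.
pose g (x : 'rV[R]_n) : {ffun bT -> bool} :=
  [ffun b => `[< K x `&` cube (b :: p) !=set0 >] ].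
have gE x : choose x p = odflt [ffun => false] [pick b | g x b].
  by rewrite /choose; congr odflt; apply: eq_pick => b; rewrite ffunE.
have -> : [set x : vecB R n | S (choose x p)] = \bigcup_(phi in setT)
    ([set x : vecB R n | g x = phi] `&`
     [set _ : vecB R n | S (odflt [ffun => false] [pick b | phi b])]).
  apply/seteqP; split => x /=.
    by rewrite gE => Sx; exists (g x).
  by move=> [phi _ [<- Sx]]; rewrite gE.
apply: cnt_bigcup_meas => phi; apply: measurableI; last exact: const_meas.
have -> : [set x : vecB R n | g x = phi] =
    \bigcap_(b in setT) [set x : vecB R n | g x b = phi b].
  apply/seteqP; split => x /=.
    by move=> <-.
  by move=> h; apply/ffunP => b; exact: h.
apply: cnt_bigcap_meas => b.
case E : (phi b).
  have -> : [set x : vecB R n | g x b = true] =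
      [set x | K x `&` cube (b :: p) !=set0].
    by apply/seteqP; split => x /=; rewrite ffunE => /asboolP.
  exact: Kmeas.
have -> : [set x : vecB R n | g x b = false] =
    ~` [set x | K x `&` cube (b :: p) !=set0].
  apply/seteqP; split => x /=; rewrite ffunE.
    by move=> h1 h2; move: h1; rewrite asboolT.
  by move=> h; apply/asboolP.
by apply: measurableC; exact: Kmeas.
Qed.

Lemma meas_path j : forall S : set (seq bT),
  measurable [set x : vecB R n | S (path x j)].
Proof.
elim: j => [|j IH] S /=; first exact: const_meas.
have -> : [set x : vecB R n | S (choose x (path x j) :: path x j)] =
    \bigcup_(q in setT) ([set x : vecB R n | path x j = q] `&`
                         [set x : vecB R n | S (choose x q :: q)]).
  apply/seteqP; split => x /=.
    by move=> Sx; exists (path x j).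
  by move=> [q _ [<- h]].
apply: cnt_bigcup_meas => q; apply: measurableI.
  exact: (IH [set q' | q' = q]).
exact: (meas_choose q [set b | S (b :: q)]).
Qed.

Lemma path_meet x : K x !=set0 -> forall j, K x `&` cube (path x j) !=set0.
Proof.
move=> [u Ku]; elim => [|j IH] /=.
  exists u; split => //; rewrite /cube /= /hs expr0 divr1; exact: (Kbox Ku).
have [v [Kv Cv]] := IH; have [b Cb] := cube_cover Cv.
rewrite /choose; case: pickP => [b' /asboolP h | h] //=.
by move: (h b); rewrite asboolT //; exists v.
Qed.

Lemma path_dec x i j : (i <= j)%N -> cube (path x j) `<=` cube (path x i).
Proof.
move=> /subnK <-; elim: (j - i)%N => [|k IH] //=.
by rewrite ?addSn /= => u /cube_sub; exact: IH.
Qed.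

Lemma path_lim x : K x !=set0 -> exists u, K x u /\ forall j, cube (path x j) u.
Proof.
move=> Kx0.
pose F := filter_from setT (fun j => K x `&` cube (path x j)).
have FF : Filter F.
  apply: filter_fromT_filter; first by exists 0%N.
  move=> i j; exists (maxn i j) => u [Ku Cu]; split; split => //.
    by apply: path_dec Cu; exact: leq_maxl.
  by apply: path_dec Cu; exact: leq_maxr.
have PF : ProperFilter F by apply: filter_from_proper => j _; exact: path_meet.
have FK : F (K x) by exists 0%N => // u [].
have [u [Ku clu]] := @Kc x F PF FK.
exists u; split => // j; apply: box_closed => V hV.
have [z [[Kz Cz] Vz]] := clu _ V (@in_filter_from _ _ setT
   (fun j => K x `&` cube (path x j)) j I) hV.
by exists z.
Qed.

Definition sel x : 'rV[R]_m :=
  match pselect (exists u, K x u /\ forall j, cube (path x j) u) with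
  | left h => proj1_sig (cid h)
  | right _ => d0
  end.

Lemma sel_in x : K x !=set0 -> K x (sel x) /\ forall j, cube (path x j) (sel x).
Proof.
rewrite /sel; case: pselect => [h _ | h /path_lim //].
by case: (cid h).
Qed.

Lemma sel_out x : ~ (K x !=set0) -> sel x = d0.
Proof.
move=> h; rewrite /sel; case: pselect => [hh|//]; exfalso; case: hh => u [Ku _].
by exfalso; apply: h; exists u.
Qed.

Lemma sel_meas : measurable_fun setT (sel : vecB R n -> vecB R m).
Proof.
apply: (@measurability _ _ (vecB R n) (vecB R m) setT sel open) => //.
move=> _ [Op oO <-]; rewrite setTI.
pose Dom := [set x : vecB R n | K x `&` cube [::] !=set0].
have DomE x : Dom x <-> K x !=set0.
  split; first by move=> [u [Ku _]]; exists u.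
  by move=> [u Ku]; exists u; split => //; rewrite /cube /= /hs expr0 divr1; exact: (Kbox Ku).
have -> : sel @^-1` Op = (Dom `&` \bigcup_(j in setT)
     [set x : vecB R n | cube (path x j) `<=` Op]) `|`
     (~` Dom `&` [set _ : vecB R n | Op d0]).
  apply/seteqP; split => x /=.
    move=> hO; case: (pselect (K x !=set0)) => hK.
      left; split; first exact/DomE.
      have [_ Cs] := sel_in hK.
      rewrite openE in oO; have := oO _ hO => /nbhs_ballP [e e0 be].
      have bd := archi_boundP (divr_ge0 (ltW L0) (ltW e0)).
      set j := Num.bound (L / e) in bd.
      exists j => // v Cv; apply: be; split => // i k; have -> : i = ord0 by apply: val_inj; case: i => -[].
      rewrite -ball_normE /ball_ /=.
      apply: le_lt_trans (cube_diam k (Cs j) Cv) _.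
      rewrite size_path /hs ltr_pdivrMr ?exprn_gt0 //.
      rewrite ltr_pdivrMr // in bd.
      apply: lt_le_trans bd _; rewrite mulrC ler_pM2l //.
      rewrite -natrX ler_nat; exact/ltnW/ltn_expl.
    by right; split; [move/DomE | rewrite -(sel_out hK)].
  move=> [[/DomE hK [j _ sub]] | [nD Od0]].
    by apply: sub; have [_ hh] := sel_in hK; exact: hh.
  by rewrite sel_out // => /DomE.
apply: measurableU; apply: measurableI.
- exact: Kmeas.
- by apply: bigcup_measurable => j _; exact: (meas_path j [set p | cube p `<=` Op]).
- by apply: measurableC; exact: Kmeas.
- exact: const_meas.
Qed.

Lemma selection : exists s : 'rV[R]_n -> 'rV[R]_m,
  measurable_fun setT (s : vecB R n -> vecB R m) /\
  (forall x, K x !=set0 -> K x (s x)) /\ (forall x, ~ (K x !=set0) -> s x = d0).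
Proof.
exists sel; split; first exact: sel_meas.
by split; [move=> x /sel_in [] | exact: sel_out].
Qed.

End Sel.


Import Num.Def.

Lemma entry_le_norm (R : realType) m (v : 'rV[R]_m) i : `|v ord0 i| <= `|v|.
Proof.
have /mapP[j Hj ->] : `|v ord0 i| \in [seq `|v x.1 x.2| | x : 'I_1 * 'I_m].
  by apply/mapP; exists (ord0, i) => //=; rewrite mem_enum.
by rewrite [leRHS]/normr /= mx_normrE; apply/bigmax_geP; right => /=; exists j.
Qed.

Lemma compact_closed_rV (R : realType) m (A : set 'rV[R]_m) : compact A -> closed A.
Proof. by apply: compact_closed; exact: norm_hausdorff. Qed.

Section Main.
Variables (R : realType) (n m N : nat) (X : set 'rV[R]_n) (U : set 'rV[R]_m)
  (f : nat -> 'rV[R]_n -> 'rV[R]_m -> 'rV[R]_n) (T : nat -> set 'rV[R]_n)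
  (Ei : set 'rV[R]_n).

Definition Hs t (C' : set 'rV[R]_n) : set ('rV[R]_n * 'rV[R]_m) :=
  [set p | T t p.1 /\ U p.2 /\ forall e, Ei e -> C' (f t p.1 p.2 + e)].
Definition Step t C' := [set z | exists u, U u /\ Hs t C' (z, u)].
Fixpoint Cr j := if j is j'.+1 then Step (N - j'.+1) (Cr j') else T N.
Definition Cs t := Cr (N - t).

Lemma Cs_step t : (t < N)%N -> Cs t = Step t (Cs t.+1).
Proof.
move=> tN; rewrite /Cs.
have -> : (N - t = (N - t.+1).+1)%N by lia.
rewrite /=; have -> : (N - (N - t.+1).+1 = t)%N by lia.
by [].
Qed.

Lemma Cs_N : Cs N = T N.
Proof. by rewrite /Cs subnn. Qed.

Lemma Cs_T t : (t <= N)%N -> Cs t `<=` T t.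
Proof.
rewrite leq_eqVlt => /orP[/eqP -> | tN]; first by rewrite Cs_N.
by rewrite Cs_step // => z [u [_ [Tz _]]].
Qed.

Lemma Cr_closed : (0 < N)%N ->
  (forall t, (t < N)%N ->
     {within X `*` U, continuous (fun p : 'rV[R]_n * 'rV[R]_m => f t p.1 p.2)}) ->
  (forall t, (t <= N)%N -> T t `<=` X) ->
  (forall t, (t <= N)%N -> closed (T t)) -> compact U ->
  forall j, closed (Cr j).
Proof.
move=> N0 cont TX cT cU; elim => [|j IH] /=; first exact: cT.
have tN : (N - j.+1 < N)%N by lia.
apply: (proj_closed _ cU).
exact: (@H_closed R n m (fun p => f (N - j.+1) p.1 p.2) X (T (N - j.+1)) (Cr j) Ei U
  (cont _ tN) (TX _ (ltnW tN)) (cT _ (ltnW tN)) (compact_closed_rV cU) IH).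
Qed.

Lemma traj_ext pi k y ws ws' j :
  (forall t, (t < k + j)%N -> ws t = ws' t) ->
  traj f pi k y ws j = traj f pi k y ws' j.
Proof.
elim: j => [|j IH] h //=.
rewrite IH; last by move=> t ht; apply: h; lia.
by rewrite h //; lia.
Qed.

Lemma reach_C k x : (k < N)%N -> (forall t, (t <= N)%N -> T t `<=` X) ->
  min_reach_set f X U T N Ei k x -> Cs k x.
Proof.
move=> hk TX [Tkx [nu [nuU hnu]]].
suff H : forall r j, (j + r = N - k)%N -> forall ws,
    (forall t, (k <= t < k + j)%N -> Ei (ws t)) -> Cs (k + j) (traj f nu k x ws j).
  have := H (N - k)%N 0%N (add0n _) (fun _ => 0).
  rewrite addn0; apply => t /andP[h1 h2]; lia.
elim => [|r IH] j hj ws hws.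
  have ejN : (k + j = N)%N by lia.
  have hadm : forall t, (k <= t < N)%N -> Ei (ws t).
    by move=> t /andP[h1 h2]; apply: hws; apply/andP; split; lia.
  have := hnu ws hadm j; rewrite ejN Cs_N; apply; apply/andP; split; lia.
have tN : (k + j < N)%N by lia.
rewrite Cs_step //.
have Tz : T (k + j) (traj f nu k x ws j).
  case: (posnP j) => [j0 | jpos]; first by rewrite j0 addn0.
  have e0 : Ei (ws k) by apply: hws; apply/andP; split; lia.
  pose ws2 := fun t => if (t < k + j)%N then ws t else ws k.
  rewrite (@traj_ext _ _ _ ws ws2); last by move=> t ht; rewrite /ws2 ht.
  apply: hnu; last by apply/andP; split; lia.
  move=> t /andP[h1 h2]; rewrite /ws2; case: ifP => h3 //.
  by apply: hws; apply/andP; split.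
have Uu : U (nu (k + j) (traj f nu k x ws j)).
  by apply: nuU; [apply/andP; split; lia | exact: (TX _ (ltnW tN))].
exists (nu (k + j) (traj f nu k x ws j)); split; first exact: Uu.
split; first exact: Tz.
split; first exact: Uu.
move=> e Ee.
pose ws' := fun t => if t == (k + j)%N then e else ws t.
have := IH j.+1 (ltac:(lia)) ws'.
rewrite addnS /= (@traj_ext _ _ _ ws' ws j); last first.
  by move=> t ht; rewrite /ws' (ltn_eqF ht).
rewrite /ws' eqxx; apply => t /andP[h1 h2].
case: eqP => [_ | ne] //; apply: hws; apply/andP; split; lia.
Qed.

Lemma pol_C k x pi : Cs k x ->
  (forall t z, (k <= t < N)%N -> Cs t z -> forall e, Ei e ->
      Cs t.+1 (f t z (pi t z) + e)) ->
  forall ws, (forall t, (k <= t < N)%N -> Ei (ws t)) ->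
  forall j, (j <= N - k)%N -> Cs (k + j) (traj f pi k x ws j).
Proof.
move=> Cx hpi ws hws; elim => [|j IH] hj /=; first by rewrite addn0.
rewrite addnS; apply: hpi.
- by apply/andP; split; lia.
- by apply: IH; lia.
- by apply: hws; apply/andP; split; lia.
Qed.

Lemma policy_exists : (0 < N)%N ->
  (forall t, (t < N)%N ->
     {within X `*` U, continuous (fun p : 'rV[R]_n * 'rV[R]_m => f t p.1 p.2)}) ->
  (forall t, (t <= N)%N -> T t `<=` X) ->
  (forall t, (t <= N)%N -> closed (T t)) -> compact U ->
  forall u0, U u0 ->
  exists pi : nat -> 'rV[R]_n -> 'rV[R]_m, forall t,
    measurable_fun setT (pi t : vecB R n -> vecB R m) /\ (forall z, U (pi t z)) /\
    ((t < N)%N -> forall z, Cs t z -> forall e, Ei e -> Cs t.+1 (f t z (pi t z) + e)).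
Proof.
move=> N0 cont TX cT cU u0 Uu0.
suff h : forall t, exists s : 'rV[R]_n -> 'rV[R]_m,
    measurable_fun setT (s : vecB R n -> vecB R m) /\ (forall z, U (s z)) /\
    ((t < N)%N -> forall z, Cs t z -> forall e, Ei e -> Cs t.+1 (f t z (s z) + e)).
  by case: (choice h) => pi hpi; exists pi.
move=> t; case: (ltnP t N) => htN; last first.
  exists (fun _ => u0); split; first exact: measurable_cst.
  by split => // h; move: htN; rewrite leqNgt h.
have cC : closed (Cs t.+1) by apply: Cr_closed.
pose H := Hs t (Cs t.+1).
have cUc := compact_closed_rV cU.
have cH : closed H.
  exact: (@H_closed R n m (fun p => f t p.1 p.2) X (T t) (Cs t.+1) Ei U
    (cont _ htN) (TX _ (ltnW htN)) (cT _ (ltnW htN)) cUc cC).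
pose K := fun z => [set u | U u /\ H (z, u)].
have [M [Mr hM]] := compact_bounded cU.
pose M' : R := `|M| + 1.
have MM : M < M' by rewrite /M'; have := ler_norm M; lra.
have M'0 : 0 < M' by rewrite /M'; have := normr_ge0 M; lra.
have L0 : 0 < M' + M' by lra.
have Kc : forall z, compact (K z).
  move=> z; apply: (subclosed_compact _ cU); last by move=> u [].
  have hh := closedI cUc (slice_closed (z := z) cH); exact: hh.
have Kbox : forall z, K z `<=` box (const_mx (- M')) (const_mx (- M') + (M' + M') *: const_mx 1).
  move=> z u [Uu _] i; rewrite !mxE mulr1.
  have := le_trans (entry_le_norm u i) (hM _ MM u Uu); rewrite ler_norml => /andP[h1 h2].
  apply/andP; split; lra.
have Kmeas : forall a b, measurable ([set z | K z `&` box a b !=set0] : set (vecB R n)).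
  move=> a b.
  have -> : [set z | K z `&` box a b !=set0] =
      [set z | exists u, (U `&` box a b) u /\ H (z, u)].
    apply/seteqP; split => z /=.
      by move=> [u [[Uu Hu] Bu]]; exists u.
    by move=> [u [[Uu Bu] Hu]]; exists u.
  apply: closed_meas; apply: proj_closed cH _.
  apply: (subclosed_compact _ cU); last by move=> u [].
  exact: (closedI cUc (@box_closed R _ a b)).
have [s [sm [sin sout]]] := selection u0 L0 Kc Kbox Kmeas.
exists s; split => //; split.
  move=> z; case: (pselect (K z !=set0)) => hz; first by case: (sin z hz).
  by rewrite sout.
move=> _ z Cz e Ee.
have hz : K z !=set0.
  by move: Cz; rewrite Cs_step // => -[u [Uu Hu]]; exists u.
by have [_ [_ [_ h]]] := sin z hz; exact: h.
Qed.

End Main.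

Theorem theorem7 (R : realType) (n m N : nat)
  (X : set 'rV[R]_n) (U : set 'rV[R]_m) (W : set 'rV[R]_n)
  (f : nat -> 'rV[R]_n -> 'rV[R]_m -> 'rV[R]_n) (T : nat -> set 'rV[R]_n)
  (d : measure_display) (Omega : measurableType d) (P : probability Omega R)
  (w : nat -> Omega -> 'rV[R]_n) (Pw : probability (vecB R n) R)
  (alpha : R) (k M : nat) (E : nat -> set 'rV[R]_n) :
  (0 < N)%N ->
  W 0 ->
  (forall t x u, (t < N)%N -> X x -> U u -> X (f t x u)) ->
  (forall t, (t <= N)%N -> T t `<=` X) ->
  (forall t om, (t < N)%N -> W (w t om)) ->
  iid_with_law P w N Pw ->
  abs_continuous Pw ->
  (forall t, (t <= N)%N -> closed (T t)) ->
  compact U ->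
  (forall t, (t < N)%N ->
     {within X `*` U, continuous (fun p : 'rV[R]_n * 'rV[R]_m => f t p.1 p.2)}) ->
  0 <= alpha <= 1 ->
  (k < N)%N ->
  (forall i, (1 <= i <= M)%N ->
     [/\ E i `<=` W, [bounded x | x in E i] & measurable (E i : set (vecB R n))]) ->
  (forall i, (1 <= i <= M)%N ->
     P [set om | forall t, (k <= t < N)%N -> E i (w t om)] = alpha%:E) ->
  \bigcup_(i in [set i | (1 <= i <= M)%N]) min_reach_set f X U T N (E i) k
    `<=` stoch_reach_set P w f X U T N k alpha.
Proof.
move=> N0 _ _ TX _ iid _ cT cU cont _ hk hE hP x [i hi hx].
have mEi : measurable (E i : set (vecB R n)) by case: (hE i hi).
have [Tkx [nu [nuU _]]] := hx.
have Uu0 : U (nu k x).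
  by apply: nuU; [rewrite leqnn hk | exact: (TX k (ltnW hk))].
have [pi hpi] := policy_exists (E i) N0 cont TX cT cU Uu0.
have Ckx := reach_C hk TX hx.
split; first exact: Tkx.
case: iid => wm _ _.
pose A := [set om | forall t, (k <= t < N)%N -> E i (w t om)].
have mA : measurable A.
  have -> : A = \bigcap_(t in [set t | (k <= t < N)%N]) (w t @^-1` E i).
    by apply/seteqP; split => om /= h t /h.
  apply: bigcap_measurableType => t /andP[_ htN].
  by have := wm t htN measurableT (E i) mEi; rewrite setTI.
apply: (@le_trans _ _ (reach_prob P w f T N k pi x)).
  rewrite /reach_prob /inner_prob -(hP i hi).
  apply: ereal_sup_ubound; exists A => //; split => // om hom j /andP[hj1 hj2].
  apply: (Cs_T (N := N) (U := U) (f := f) (Ei := E i)); first by rewrite -leq_subRL // ltnW.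
  apply: (pol_C Ckx) => //.
  by move=> t z ht Cz e Ee; apply: (hpi t).2.2 => //; case/andP: ht.
apply: ereal_sup_ubound; exists pi => //.
move=> t ht; split; last by move=> z _; exact: (hpi t).2.1.
move=> nu0 B mB; exists (pi t @^-1` B), (pi t @^-1` B).
have h := (hpi t).1 measurableT B mB; rewrite setTI in h.
by split => //; rewrite setDv measure0.
Qed.
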